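(* Let $L$ be a Lie algebra over a field $K$ of characteristic $\neq 2$. The following are equivalent: (i) for any $\varphi,\psi \in \mathrm{HomLie}(L)$, $\frac12(\varphi\circ\psi + \psi\circ\varphi) \in \mathrm{HomLie}(L)$; (ii) for any $\varphi \in \mathrm{HomLie}(L)$, $\varphi^2 \in \mathrm{HomLie}(L)$; (iii) for any $\varphi \in \mathrm{HomLie}(L)$ and any polynomial $f \in K[t]$, $f(\varphi) \in \mathrm{HomLie}(L)$; (iv) for any $\varphi,\psi \in \mathrm{HomLie}(L)$, the bilinear map $F_{\varphi,\psi}: L\times L \to L$, $F_{\varphi,\psi}(x,y) = [\varphi(x),\psi(y)] + [\psi(x),\varphi(y)]$, satisfies $[F_{\varphi,\psi}(x,y),z] + [F_{\varphi,\psi}(z,x),y] + [F_{\varphi,\psi}(y,z),x] = 0$ for all $x,y,z \in L$.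
   Context: A Hom-Lie structure on a Lie algebra $L$ is a linear map $\varphi: L \to L$ satisfying $[[x,y],\varphi(z)] + [[z,x],\varphi(y)] + [[y,z],\varphi(x)] = 0$ for all $x,y,z \in L$. $\mathrm{HomLie}(L)$ denotes the vector space of all Hom-Lie structures on $L$; $\circ$ denotes composition of maps. *)

(* Defs.v *)
From HB Require Import structures.
From mathcomp Require Import all_boot all_order all_algebra.
Set Implicit Arguments. Unset Strict Implicit. Unset Printing Implicit Defensive.
Import GRing.Theory.
Local Open Scope ring_scope.

Definition linmap (K : fieldType) (L : lmodType K) (f : L -> L) : Prop :=
  forall (a : K) (x y : L), f (a *: x + y) = a *: f x + f y.

Definition is_lie_bracket (K : fieldType) (L : lmodType K) (br : L -> L -> L) : Prop :=
  [/\ (forall z : L, linmap (fun x => br x z)),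
      (forall x : L, linmap (br x)),
      (forall x : L, br x x = 0) &
      (forall x y z : L, br x (br y z) + br y (br z x) + br z (br x y) = 0)].

Definition HomLie (K : fieldType) (L : lmodType K) (br : L -> L -> L) (phi : L -> L) : Prop :=
  linmap phi /\
  forall x y z : L,
    br (br x y) (phi z) + br (br z x) (phi y) + br (br y z) (phi x) = 0.

Definition poly_map (K : fieldType) (L : lmodType K) (f : {poly K}) (phi : L -> L) : L -> L :=
  fun x => \sum_(i < size f) f`_i *: iter i phi x.

Definition Fmap (K : fieldType) (L : lmodType K) (br : L -> L -> L) (phi psi : L -> L)
  (x y : L) : L := br (phi x) (psi y) + br (psi x) (phi y).

(* Main.v *)
Require Import Defs.
From HB Require Import structures.
From mathcomp Require Import all_boot all_order all_algebra.
Set Implicit Arguments. Unset Strict Implicit. Unset Printing Implicit Defensive.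
Import GRing.Theory.
Local Open Scope ring_scope.

Section S.
Variables (K : fieldType) (L : lmodType K) (br : L -> L -> L).
Hypothesis Hbr : is_lie_bracket br.

Lemma zero_of_dbl (a : L) : a = a + a -> a = 0.
Proof. by move=> h; apply: (addrI a); rewrite addr0 -h. Qed.

Lemma brDl x y z : br (x + y) z = br x z + br y z.
Proof. by case: Hbr => h _ _ _; have := h z 1 x y; rewrite !scale1r. Qed.
Lemma brDr x y z : br z (x + y) = br z x + br z y.
Proof. by case: Hbr => _ h _ _; have := h z 1 x y; rewrite !scale1r. Qed.
Lemma br0l z : br 0 z = 0.
Proof. by apply: zero_of_dbl; rewrite -brDl addr0. Qed.
Lemma br0r z : br z 0 = 0.
Proof. by apply: zero_of_dbl; rewrite -brDr addr0. Qed.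
Lemma brZl a x z : br (a *: x) z = a *: br x z.
Proof. by case: Hbr => h _ _ _; have := h z a x 0; rewrite !addr0 br0l addr0. Qed.
Lemma brZr a x z : br z (a *: x) = a *: br z x.
Proof. by case: Hbr => _ h _ _; have := h z a x 0; rewrite !addr0 br0r addr0. Qed.
Lemma brNl x z : br (- x) z = - br x z.
Proof. by rewrite -scaleN1r brZl scaleN1r. Qed.
Lemma brNr x z : br z (- x) = - br z x.
Proof. by rewrite -scaleN1r brZr scaleN1r. Qed.
Lemma anti x y : br y x = - br x y.
Proof.
case: Hbr => _ _ h _; have := h (x + y).
rewrite brDl !brDr !h add0r addr0 => /eqP; rewrite addr_eq0 => /eqP ->.
by rewrite opprK.
Qed.
Lemma jac a b c : br (br a b) c + br (br b c) a + br (br c a) b = 0.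
Proof.
case: Hbr => _ _ _ h; have := h c a b.
rewrite (anti (br a b) c) (anti (br b c) a) (anti (br c a) b) -!opprD.
by move/(congr1 -%R); rewrite opprK oppr0.
Qed.

Definition Jm (g : L -> L) x y z :=
  br (br x y) (g z) + br (br z x) (g y) + br (br y z) (g x).

Lemma acaa (a b c d e f : L) : (a + b) + (c + d) + (e + f) = (a + c + e) + (b + d + f).
Proof. by rewrite [X in X + _ = _]addrACA [X in X = _]addrACA. Qed.

Lemma Jm_lin a f g x y z :
  Jm (fun v => a *: f v + g v) x y z = a *: Jm f x y z + Jm g x y z.
Proof. by rewrite /Jm !brDr !brZr !scalerDr acaa. Qed.

Lemma Jm_ext f g x y z : (forall v, f v = g v) -> Jm f x y z = Jm g x y z.
Proof. by move=> h; rewrite /Jm !h. Qed.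

Lemma Jm0 x y z : Jm (fun _ => 0) x y z = 0.
Proof. by rewrite /Jm !br0r !addr0. Qed.

Lemma Jm_id x y z : Jm (fun v => v) x y z = 0.
Proof. by rewrite /Jm addrAC jac. Qed.

Lemma linmap_lin (a : K) (f g : L -> L) : linmap f -> linmap g -> linmap (fun v => a *: f v + g v).
Proof.
move=> hf hg b u w; rewrite hf hg !scalerDr !scalerA mulrC.
by rewrite addrACA.
Qed.

Lemma linmap_ext (f g : L -> L) : (forall v, f v = g v) -> linmap f -> linmap g.
Proof. by move=> h hf b u w; rewrite -!h hf. Qed.

Lemma linmap_comp (f g : L -> L) : linmap f -> linmap g -> linmap (fun v => f (g v)).
Proof. by move=> hf hg b u w; rewrite hg hf. Qed.

Lemma linmap0 : linmap (fun _ : L => 0).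
Proof. by move=> b u w; rewrite scaler0 addr0. Qed.

Lemma linmap_id : linmap (fun v : L => v).
Proof. by []. Qed.

Lemma HomLieE (g : L -> L) : HomLie br g <-> linmap g /\ forall x y z, Jm g x y z = 0.
Proof. by []. Qed.

Lemma HL_lin (a : K) (f g : L -> L) : HomLie br f -> HomLie br g -> HomLie br (fun v => a *: f v + g v).
Proof.
move=> [lf jf] [lg jg]; split; first exact: linmap_lin.
by move=> x y z; have := Jm_lin a f g x y z; rewrite /Jm => ->; rewrite jf jg scaler0 addr0.
Qed.

Lemma HL_ext (f g : L -> L) : (forall v, f v = g v) -> HomLie br f -> HomLie br g.
Proof.
move=> h [lf jf]; split; first exact: linmap_ext lf.
by move=> x y z; have := Jm_ext x y z h; rewrite /Jm => <-; apply: jf.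
Qed.

Lemma HL0 : HomLie br (fun _ => 0).
Proof. by split; [exact: linmap0 | move=> x y z; have := Jm0 x y z]. Qed.

Lemma HL_id : HomLie br (fun v => v).
Proof. by split; [exact: linmap_id | move=> x y z; have := Jm_id x y z]. Qed.

Lemma HL_add (f g : L -> L) : HomLie br f -> HomLie br g -> HomLie br (fun v => f v + g v).
Proof. by move=> hf hg; apply: HL_ext (HL_lin 1 hf hg) => v; rewrite scale1r. Qed.

Lemma HL_scale (a : K) (f : L -> L) : HomLie br f -> HomLie br (fun v => a *: f v).
Proof. by move=> hf; apply: HL_ext (HL_lin a hf HL0) => v; rewrite addr0. Qed.

Definition cyc (T : L -> L -> L -> L) x y z := T x y z + T y z x + T z x y.

Lemma cycD T1 T2 x y z :
  cyc (fun u v w => T1 u v w + T2 u v w) x y z = cyc T1 x y z + cyc T2 x y z.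
Proof. by rewrite /cyc acaa. Qed.
Lemma cyc_ext T1 T2 x y z : (forall u v w, T1 u v w = T2 u v w) ->
  cyc T1 x y z = cyc T2 x y z.
Proof. by move=> h; rewrite /cyc !h. Qed.
Lemma cyc_rot T x y z : cyc (fun u v w => T v w u) x y z = cyc T x y z.
Proof. by rewrite /cyc addrC addrA. Qed.
Lemma cyc_rot2 T x y z : cyc (fun u v w => T w u v) x y z = cyc T x y z.
Proof. by rewrite /cyc -addrA addrC. Qed.
Lemma cyc0 x y z : cyc (fun _ _ _ => 0) x y z = 0.
Proof. by rewrite /cyc !addr0. Qed.

Lemma gen1 (a b c d e f g : L) : a + b + c = 0 -> b + d + e = 0 -> c + f + g = 0 ->
  a = d + e + f + g.
Proof.
move=> h1 h2 h3.
have hb : b = - (d + e) by apply/eqP; rewrite -addr_eq0 addrA h2.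
have hc : c = - (f + g) by apply/eqP; rewrite -addr_eq0 addrA h3.
have : a = - (b + c) by apply/eqP; rewrite -addr_eq0 addrA h1.
by rewrite hb hc -opprD opprK addrA.
Qed.

Lemma gen2 (a a' d E d' E' j1 j2 : L) :
  a = d + j1 + j2 + E -> a' = d' + j2 + j1 + E' ->
  d + a' + E = 0 -> E' + d' + a = 0 -> (a + a') *+ 2 = (j1 + j2) *+ 2.
Proof.
move=> h1 h2 h3 h4.
have hdE : d + E = - a' by apply/eqP; rewrite -addr_eq0 addrAC h3.
have hdE' : d' + E' = - a by apply/eqP; rewrite -addr_eq0 [d' + E']addrC h4.
have e1 : a = - a' + (j1 + j2) by rewrite h1 -hdE -[d + j1 + j2]addrA addrAC.
have e2 : a' = - a + (j1 + j2) by rewrite h2 -hdE' -[d' + j2 + j1]addrA [j2 + j1]addrC addrAC.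
rewrite mulr2n mulr2n {1}e1 {2}e2.
by rewrite [X in X + _ = _]addrACA -opprD addrAC [a' + a]addrC addNr add0r. Qed.

Lemma key (p q : L -> L) :
  (forall x y z, Jm p x y z = 0) -> (forall x y z, Jm q x y z = 0) ->
  forall x y z,
  (br (Fmap br p q x y) z + br (Fmap br p q z x) y + br (Fmap br p q y z) x) *+ 2
  = Jm (fun v => p (q v) + q (p v)) x y z *+ 2.
Proof.
move=> hp hq x y z.
pose T1 u v w := br (br (p u) (q v)) w.
pose T1' u v w := br (br (q u) (p v)) w.
pose D u v w := br (br u (q v)) (p w).
pose D' u v w := br (br u (p v)) (q w).
pose e u v w := br (br w u) (p (q v)).
pose e' u v w := br (br w u) (q (p v)).
pose f u v w := br (br v w) (q (p u)).
pose f' u v w := br (br v w) (p (q u)).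
pose E u v w := br (br (p u) v) (q w).
pose E' u v w := br (br (q u) v) (p w).
have S1 u v w : T1 u v w = D u v w + e u v w + f u v w + E u v w :=
  gen1 (jac (p u) (q v) w) (hp (q v) w u) (hq w (p u) v).
have S1' u v w : T1' u v w = D' u v w + e' u v w + f' u v w + E' u v w :=
  gen1 (jac (q u) (p v) w) (hq (p v) w u) (hp w (q u) v).
have J1 u v w : D u v w + T1' v w u + E w u v = 0 := jac u (q v) (p w).
have J2 u v w : E' u v w + D' v w u + T1 w u v = 0 := jac (q u) v (p w).
have eA : br (Fmap br p q x y) z + br (Fmap br p q z x) y + br (Fmap br p q y z) x
   = cyc T1 x y z + cyc T1' x y z.
  by rewrite -cycD /cyc /Fmap !brDl addrAC.
have c1 : cyc T1 x y z = cyc D x y z + cyc e x y z + cyc f x y z + cyc E x y z.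
  by rewrite (cyc_ext x y z S1) !cycD.
have c1' : cyc T1' x y z = cyc D' x y z + cyc f x y z + cyc e x y z + cyc E' x y z.
  rewrite (cyc_ext x y z S1') !cycD.
  have -> : cyc e' x y z = cyc f x y z by rewrite -(cyc_rot2 e').
  have -> : cyc f' x y z = cyc e x y z by exact: (cyc_rot2 e x y z).
  by [].
have c2 : cyc D x y z + cyc T1' x y z + cyc E x y z = 0.
  rewrite -(cyc_rot T1') -(cyc_rot2 E) -!cycD -(cyc0 x y z).
  exact: cyc_ext.
have c3 : cyc E' x y z + cyc D' x y z + cyc T1 x y z = 0.
  rewrite -(cyc_rot D') -(cyc_rot2 T1) -!cycD -(cyc0 x y z).
  exact: cyc_ext.
rewrite eA (gen2 c1 c1' c2 c3).
have -> : Jm (fun v => p (q v) + q (p v)) x y z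
   = Jm (fun v => p (q v)) x y z + Jm (fun v => q (p v)) x y z.
  rewrite -[Jm (fun v => p (q v)) x y z]scale1r -Jm_lin.
  by apply: Jm_ext => v; rewrite scale1r.
congr (_ *+ 2); congr (_ + _).
  by rewrite /cyc /e /Jm [X in X + _ = _]addrC.
by rewrite /cyc /f /Jm addrC [X in _ + X = _]addrC addrA.
Qed.

Hypothesis H2 : (2%:R : K) != 0.

Lemma two_cancel (u v : L) : u *+ 2 = v *+ 2 -> u = v.
Proof.
move=> h; rewrite -[u]scale1r -[v]scale1r -(mulVf H2) -!scalerA !scaler_nat.
by rewrite h.
Qed.

Lemma half_dbl (w : L) : 2%:R^-1 *: (w + w) = w.
Proof. by rewrite -mulr2n -scaler_nat scalerA mulVf // scale1r. Qed.

Lemma Jm_scale (a : K) (g : L -> L) x y z :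
  Jm (fun v => a *: g v) x y z = a *: Jm g x y z.
Proof. by rewrite /Jm !brZr -!scalerDr. Qed.

Lemma linD (g : L -> L) : linmap g -> forall u w, g (u + w) = g u + g w.
Proof. by move=> hg u w; have := hg 1 u w; rewrite !scale1r. Qed.

Definition P0 := forall phi psi, HomLie br phi -> HomLie br psi ->
          HomLie br (fun x => 2%:R^-1 *: (phi (psi x) + psi (phi x))).
Definition P1 := forall phi, HomLie br phi -> HomLie br (fun x => phi (phi x)).
Definition P2 := forall phi (f : {poly K}), HomLie br phi -> HomLie br (poly_map f phi).
Definition P3 := forall phi psi, HomLie br phi -> HomLie br psi ->
          forall x y z : L,
            br (Fmap br phi psi x y) z + br (Fmap br phi psi z x) y
            + br (Fmap br phi psi y z) x = 0.

Lemma L01 : P0 -> P1.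
Proof.
move=> h0 p hp; apply: HL_ext (h0 p p hp hp) => v.
exact: half_dbl.
Qed.

Lemma ac4 (a b c d : L) : (a + b) + (c + d) = (b + c) + (a + d).
Proof. by rewrite -!addrA addrCA [a + (c + d)]addrCA. Qed.

Lemma L10 : P1 -> P0.
Proof.
move=> h1 p q hp hq.
have hs := HL_add hp hq.
have h := HL_scale (2%:R^-1)
  (HL_lin (-1) (h1 _ hp) (HL_lin (-1) (h1 _ hq) (h1 _ hs))).
apply: HL_ext h => v; congr (_ *: _).
have lp := hp.1; have lq := hq.1.
rewrite !scaleN1r (linD lp) (linD lq) addrA -opprD addrC.
apply/eqP; rewrite subr_eq; apply/eqP.
by rewrite ac4.
Qed.

Lemma HL_sum n (c : nat -> K) (g : nat -> L -> L) :
  (forall i, HomLie br (g i)) -> HomLie br (fun x => \sum_(i < n) c i *: g i x).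
Proof.
move=> hg; elim: n => [|n IH].
  by apply: HL_ext HL0 => v; rewrite big_ord0.
by apply: HL_ext (HL_lin (c n) (hg n) IH) => v; rewrite big_ord_recr /= addrC.
Qed.

Lemma L02 : P0 -> P2.
Proof.
move=> h0 p f hp.
have hi : forall i, HomLie br (iter i p).
  elim=> [|n IH]; first exact: HL_id.
  apply: HL_ext (h0 p _ hp IH) => v.
  by rewrite -iterSr half_dbl.
exact: (@HL_sum (size f) (fun i => f`_i) (fun i => iter i p) hi).
Qed.

Lemma L21 : P2 -> P1.
Proof.
move=> h2 p hp; apply: HL_ext (h2 p 'X^2 hp) => v.
rewrite /poly_map size_polyXn !big_ord_recr big_ord0 /= !coefXn /=.
by rewrite !scale0r !add0r scale1r.
Qed.

Lemma L03 : P0 -> P3.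
Proof.
move=> h0 p q hp hq x y z.
have [_ hJ] := h0 p q hp hq.
have hJ' : Jm (fun v => p (q v) + q (p v)) x y z = 0.
  have : Jm (fun v => 2%:R^-1 *: (p (q v) + q (p v))) x y z = 0 := hJ x y z.
  rewrite Jm_scale => /eqP.
  by rewrite scaler_eq0 invr_eq0 (negPf H2) /= => /eqP.
apply: two_cancel; rewrite (key hp.2 hq.2) hJ' mul0rn.
by [].
Qed.

Lemma L30 : P3 -> P0.
Proof.
move=> h3 p q hp hq.
have lt : linmap (fun v => p (q v) + q (p v)).
  apply: linmap_ext (linmap_lin 1 (linmap_comp hp.1 hq.1) (linmap_comp hq.1 hp.1)).
  by move=> v; rewrite scale1r.
split.
  apply: linmap_ext (linmap_lin (2%:R^-1) lt linmap0).
  by move=> v; rewrite addr0.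
move=> x y z; change (Jm (fun v => 2%:R^-1 *: (p (q v) + q (p v))) x y z = 0).
rewrite Jm_scale.
have := key hp.2 hq.2 x y z; rewrite h3 // => /esym/two_cancel ->.
by rewrite scaler0.
Qed.
End S.

Theorem lemma1p2 (K : fieldType) (L : lmodType K) (br : L -> L -> L) :
  is_lie_bracket br -> (2%:R : K) != 0 ->
  [<-> (forall phi psi, HomLie br phi -> HomLie br psi ->
          HomLie br (fun x => 2%:R^-1 *: (phi (psi x) + psi (phi x))));
       (forall phi, HomLie br phi -> HomLie br (fun x => phi (phi x)));
       (forall phi (f : {poly K}), HomLie br phi -> HomLie br (poly_map f phi));
       (forall phi psi, HomLie br phi -> HomLie br psi ->
          forall x y z : L,
            br (Fmap br phi psi x y) z + br (Fmap br phi psi z x) y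
            + br (Fmap br phi psi y z) x = 0)].
Proof.
move=> Hbr H2; tfae=> h.
- exact: (L01 H2 h).
- exact: (L02 Hbr H2 (L10 Hbr h)).
- exact: (L03 Hbr H2 (L10 Hbr (L21 h))).
- exact: (L30 Hbr H2 h).
Qed.
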